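(* Let $p\in(\frac12,1]$ and let $\theta=\frac{1+\sqrt{2p-1}}{2}$. There exists $\varepsilon_0=\varepsilon_0(p)>0$ such that the following holds for every fixed $0<\varepsilon<\varepsilon_0$. Let $q=q(n)\gg\frac{\log n}{n}$, and let $G=G_n$ be $n$-vertex graphs satisfying \[\left|e(G[U])-q\frac{|U|^2}{2}\right|\leq\frac{\varepsilon^2}{4}qn^2\quad\text{for all }U\subseteq V(G).\] Consider a fixed tripartition $V(G)=V_1\sqcup V_2\sqcup V_3$. Then for every $\mu\in\mathcal{M}_{1,p}(G)$, the following hold with probability $1-o(1)$ as $n\to\infty$: (P1) $e(\mathbf{G}_\mu[V_i])\geq pq\frac{|V_i|^2}{2}-\varepsilon qn^2$ for every $i\in[3]$; (P2) $e(\mathbf{G}_\mu[V_i,V_j])\geq pq|V_i||V_j|-\varepsilon qn^2$ for all $1\leq i<j\leq3$; (P3) for every $i\in[3]$ with $|V_i|\geq\varepsilon^{1/4}n$, $\mathbf{G}_\mu[V_i]$ contains a unique largest connected component $C_i$, of order at least $(\theta-\varepsilon^{1/4})|V_i|$; (P4) for all $1\leq i<j\leq3$ with $|V_i|,|V_j|\geq\varepsilon^{1/4}n$, there exists a path from $C_i$ to $C_j$ in $\mathbf{G}_\mu[V_i,V_j]$; (P5) there is a unique largest connected component $C$ in $\mathbf{G}_\mu$ such that $|C|\geq(\theta-3\varepsilon^{1/4})n$ and $C_i\subseteq C$ for each $i\in[3]$ with $|V_i|\geq\varepsilon^{1/4}n$.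
   Context: $G[U]$ is the induced subgraph on $U$, and for disjoint $X,Y$, $G[X,Y]$ is the bipartite subgraph with vertex set $X\cup Y$ and the edges of $G$ between $X$ and $Y$. A random graph model on $G$ is a probability measure $\mu$ on subsets of $E(G)$, and $\mathbf{G}_\mu$ is the random spanning subgraph with edge set distributed according to $\mu$. $\mu$ is $1$-independent if for all sets $A,B\subseteq E(G)$ whose edges span disjoint vertex sets, $E(\mathbf{G}_\mu)\cap A$ and $E(\mathbf{G}_\mu)\cap B$ are independent. $\mathcal{M}_{1,p}(G)$ is the set of $1$-independent measures on $G$ in which each edge is present with probability exactly $p$. *)

(* Defs.v *)
From HB Require Import structures.
From mathcomp Require Import all_boot all_order all_algebra.
From mathcomp Require Import all_classical all_reals all_analysis.
Set Implicit Arguments. Unset Strict Implicit. Unset Printing Implicit Defensive.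
Import Order.TTheory GRing.Theory Num.Theory.
Local Open Scope ring_scope.

(* Graphs on the vertex set 'I_n: an edge is a 2-element subset of 'I_n,
   a graph is a set of edges. *)
Definition edge_set (n : nat) := {set {set 'I_n}}.

Definition is_simple_graph n (G : edge_set n) : Prop :=
  forall e, e \in G -> #|e| = 2%N.

Definition e_ind n (G : edge_set n) (U : {set 'I_n}) : nat :=
  #|[set e in G | e \subset U]|.

Definition e_bip n (G : edge_set n) (X Y : {set 'I_n}) : nat :=
  #|[set e in G | [exists x in X, exists y in Y, e == [set x; y]]]|.

Definition adj_ind n (G : edge_set n) (U : {set 'I_n}) : rel 'I_n :=
  fun x y => [&& x \in U, y \in U, x != y & [set x; y] \in G].
Definition adj_bip n (G : edge_set n) (X Y : {set 'I_n}) : rel 'I_n :=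
  fun x y => [&& (x \in X) && (y \in Y) || (x \in Y) && (y \in X),
                 x != y & [set x; y] \in G].

(* C is a connected component of the graph with vertex set U and
   adjacency relation r (r only relates vertices of U). *)
Definition is_component n (U : {set 'I_n}) (r : rel 'I_n) (C : {set 'I_n}) : Prop :=
  exists2 x, x \in U & C = [set y | connect r x y].

Definition unique_largest_component n (U : {set 'I_n}) (r : rel 'I_n)
    (C : {set 'I_n}) : Prop :=
  is_component U r C /\
  forall C', is_component U r C' -> C' <> C -> (#|C'| < #|C|)%N.

(* Random graph models on G: probability mass functions on subsets of E(G). *)
Definition vspan n (A : edge_set n) : {set 'I_n} := \bigcup_(e in A) e.

Definition Prob {R : realType} n (mu : {ffun edge_set n -> R})
    (P : edge_set n -> Prop) : R :=
  \sum_(S : edge_set n | `[< P S >]) mu S.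

Definition is_random_graph_model {R : realType} n (G : edge_set n)
    (mu : {ffun edge_set n -> R}) : Prop :=
  (forall S, 0 <= mu S) /\ (\sum_(S : edge_set n) mu S = 1) /\
  (forall S, mu S != 0 -> S \subset G).

Definition one_independent {R : realType} n (G : edge_set n)
    (mu : {ffun edge_set n -> R}) : Prop :=
  forall A B : edge_set n, A \subset G -> B \subset G ->
    [disjoint vspan A & vspan B] ->
    forall A' B' : edge_set n,
      Prob mu (fun S => S :&: A = A' /\ S :&: B = B') =
      Prob mu (fun S => S :&: A = A') * Prob mu (fun S => S :&: B = B').

Definition M1p {R : realType} n (p : R) (G : edge_set n)
    (mu : {ffun edge_set n -> R}) : Prop :=
  is_random_graph_model G mu /\ one_independent G mu /\
  (forall e, e \in G -> Prob mu (fun S => e \in S) = p).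

Definition Vpart n (part : 'I_n -> 'I_3) (i : 'I_3) : {set 'I_n} :=
  [set v | part v == i].

Definition good_event {R : realType} n (p q eps : R) (part : 'I_n -> 'I_3)
    (S : edge_set n) : Prop :=
  let theta := (1 + Num.sqrt (2 * p - 1)) / 2 in
  let d := eps `^ (4^-1) in
  let V := Vpart part in
  let big := fun i : 'I_3 => d * n%:R <= #|V i|%:R in
  (forall i : 'I_3,
     p * q * (#|V i|%:R ^+ 2 / 2) - eps * q * n%:R ^+ 2 <= (e_ind S (V i))%:R) /\
  (forall i j : 'I_3, (i < j)%N ->
     p * q * (#|V i|%:R * #|V j|%:R) - eps * q * n%:R ^+ 2
       <= (e_bip S (V i) (V j))%:R) /\
  exists Cs : 'I_3 -> {set 'I_n},
    (forall i : 'I_3, big i ->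
       unique_largest_component (V i) (adj_ind S (V i)) (Cs i) /\
       (theta - d) * #|V i|%:R <= #|Cs i|%:R) /\
    (forall i j : 'I_3, (i < j)%N -> big i -> big j ->
       exists x, exists y, [/\ x \in Cs i, y \in Cs j &
                               connect (adj_bip S (V i) (V j)) x y]) /\
    (exists C : {set 'I_n},
       [/\ unique_largest_component [set: 'I_n] (adj_ind S [set: 'I_n]) C,
           (theta - 3 * d) * n%:R <= #|C|%:R &
           forall i : 'I_3, big i -> Cs i \subset C]).

(* Main.v *)
Require Import Defs.
From HB Require Import structures.
From mathcomp Require Import all_boot all_order all_algebra.
From mathcomp Require Import all_classical all_reals all_analysis.
From mathcomp Require Import ring lra zify.
Import Order.TTheory GRing.Theory Num.Theory numFieldTopology.Exports numFieldNormedType.Exports.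
Local Open Scope ring_scope.
Local Notation subsetP := fintype.subsetP.
Local Notation set0 := finset.set0.
Local Notation setUC := finset.setUC.
Local Notation subUset := finset.subUset.
Local Notation sub1set := finset.sub1set.
Local Notation setIC := finset.setIC.
Local Notation setUA := finset.setUA.
Local Notation subset_trans := fintype.subset_trans.
Local Notation existsP := fintype.existsP.
Local Notation forallP := fintype.forallP.
Local Notation in_setT := finset.in_setT.


Lemma cardsU_dis (T : finType) (A B : {set T}) :
  (forall x, x \in A -> x \in B -> False) -> #|A :|: B| = (#|A| + #|B|)%N.
Proof.
move=> h; rewrite cardsU; suff ->: A :&: B = finset.set0 by rewrite cards0 subn0.
apply/setP=> x; rewrite !inE; apply/negbTE/negP => /andP[]; exact: h.
Qed.

Section Comb.
Variable n : nat.
Implicit Types (H S G : edge_set n) (A B U W X Y L : {set 'I_n}).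

Lemma simpleP {H e} : is_simple_graph H -> e \in H ->
  exists x y, x != y /\ e = [set x; y].
Proof. by move=> sH /sH /eqP/cards2P. Qed.

Lemma e_ind_split H A B : is_simple_graph H -> [disjoint A & B] ->
  e_ind H (A :|: B) = (e_ind H A + e_ind H B + e_bip H A B)%N.
Proof.
move=> sH dAB; rewrite /e_ind /e_bip.
set EA := [set e in H | e \subset A].
set EB := [set e in H | e \subset B].
set EX := [set e in H | [exists x in A, exists y in B, e == [set x; y]]].
have dis : forall x, x \in A -> x \in B -> False.
  by move=> x xA xB; move: dAB => /disjointFr/(_ xA); rewrite xB.
have -> : [set e in H | e \subset A :|: B] = EA :|: EB :|: EX.
  apply/setP => e; rewrite !inE.
  case eH: (e \in H) => //=.
  have [x [y [xy ->]]] := simpleP sH eH.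
  rewrite !finset.subUset !finset.sub1set !inE.
  apply/idP/idP.
  - case/andP => /orP[xA|xB] /orP[yA|yB].
    + by rewrite xA yA.
    + apply/orP; right; apply/existsP; exists x; rewrite xA /=.
      by apply/existsP; exists y; rewrite yB eqxx.
    + apply/orP; right; apply/existsP; exists y; rewrite yA /=.
      by apply/existsP; exists x; rewrite xB finset.setUC eqxx.
    + by rewrite xB yB orbT.
  - case/orP => [/orP[/andP[-> ->]|/andP[-> ->]]|]; rewrite ?orbT //.
    case/existsP => u /andP[uA /existsP[v /andP[vB /eqP E]]].
    have : x \in [set x; y] by rewrite !inE eqxx.
    have : y \in [set x; y] by rewrite !inE eqxx orbT.
    rewrite E !inE => /orP[]/eqP-> /orP[]/eqP->; by rewrite ?uA ?vB ?orbT.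
rewrite cardsU_dis; last first.
  move=> e; rewrite !inE => /orP[]/andP[eH es] /andP[_].
  - case/existsP => u /andP[uA /existsP[v /andP[vB /eqP E]]].
    by apply: (dis v) => //; apply: (subsetP es); rewrite E !inE eqxx orbT.
  - case/existsP => u /andP[uA /existsP[v /andP[vB /eqP E]]].
    by apply: (dis u) => //; apply: (subsetP es); rewrite E !inE eqxx.
rewrite cardsU_dis //.
move=> e; rewrite !inE => /andP[eH es] /andP[_ es'].
have [x [y [xy E]]] := simpleP sH eH.
have xe : x \in e by rewrite E !inE eqxx.
by apply: (dis x); [apply: (subsetP es) | apply: (subsetP es')].
Qed.


Definition closedin S W X := forall u v, u \in X -> v \in W -> v \notin X ->
  [set u; v] \notin S.

Lemma e_bip0 S X Y : (forall u v, u \in X -> v \in Y -> [set u; v] \notin S) ->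
  e_bip S X Y = 0%N.
Proof.
move=> h; apply/eqP; rewrite cards_eq0; apply/eqP/setP => e; rewrite !inE.
apply/negbTE/negP => /andP[eS /existsP[u /andP[uX /existsP[v /andP[vY /eqP E]]]]].
by move: (h u v uX vY); rewrite -E eS.
Qed.

Lemma split_closed S W X : is_simple_graph S -> X \subset W -> closedin S W X ->
  e_ind S W = (e_ind S X + e_ind S (W :\: X))%N /\ #|W| = (#|X| + #|W :\: X|)%N.
Proof.
move=> sS XW cl.
have WE : W = X :|: (W :\: X).
  apply/setP=> v; rewrite !inE; case vX: (v \in X) => //=.
  by rewrite (subsetP XW).
have dis : [disjoint X & W :\: X].
  rewrite -setI_eq0; apply/eqP/setP=> v; rewrite !inE.
  by case: (v \in X); rewrite ?andbF.
split.
- rewrite {1}WE e_ind_split // e_bip0 ?addn0 //.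
  move=> u v uX; rewrite inE => /andP[vX vW]; exact: cl.
- by rewrite {1}WE cardsU_dis // => v vX; rewrite inE vX.
Qed.

Lemma closedin_sub S W W' X : closedin S W X -> W' \subset W -> closedin S W' X.
Proof. by move=> cl sW u v uX vW' vX; apply: cl => //; apply: (subsetP sW). Qed.

Lemma closedinU S W X Y : closedin S W X -> closedin S W Y -> closedin S W (X :|: Y).
Proof.
move=> cX cY u v; rewrite !inE negb_or => /orP[uX|uY] vW /andP[vX vY].
- exact: cX. - exact: cY.
Qed.

Lemma closedinD S W Y L : Y \subset W -> closedin S W Y -> closedin S W L ->
  closedin S W (Y :\: L).
Proof.
move=> YW cY cL u v; rewrite !inE negb_and negbK => /andP[uL uY] vW /orP[vL|vY].
- by rewrite setUC; apply: cL => //; apply: (subsetP YW).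
- exact: cY.
Qed.

Lemma connect_inv (r : rel 'I_n) (a : {set 'I_n}) :
  (forall u v, r u v -> u \in a -> v \in a) ->
  forall x y, connect r x y -> x \in a -> y \in a.
Proof.
move=> h x y /connectP[p pth ->]; elim: p x pth => //= z p IH x /andP[rxz pth] xa.
exact: IH pth (h _ _ rxz xa).
Qed.

Definition comp S W x := [set y | connect (adj_ind S W) x y].

Lemma adj_ind_sym S W : symmetric (adj_ind S W).
Proof.
move=> x y; rewrite /adj_ind setUC eq_sym.
by case: (x \in W); case: (y \in W).
Qed.

Lemma comp_sub S W Y x : closedin S W Y -> x \in Y -> comp S W x \subset Y.
Proof.
move=> cl xY; apply/subsetP => y; rewrite inE => c.
apply: connect_inv c xY => u v /and4P[uW vW uv uvS] uY.
apply/negPn/negP => vY; by move: (cl u v uY vW vY); rewrite uvS.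
Qed.

Lemma closedinT S W : closedin S W W.
Proof. by move=> u v _ ->. Qed.

Lemma comp_subW S W x : x \in W -> comp S W x \subset W.
Proof. by move=> xW; apply: (comp_sub S W W x (closedinT S W) xW). Qed.

Lemma comp_self S W x : x \in comp S W x.
Proof. by rewrite inE connect0. Qed.

Lemma comp_closed S W x : x \in W -> closedin S W (comp S W x).
Proof.
move=> xW u v cu vW cv; apply/negP => uvS.
have uW : u \in W by apply: (subsetP (comp_subW S W x xW)).
case: (eqVneq u v) => [E|uv]; first by rewrite -E cu in cv.
move: cu cv; rewrite !inE => cu /negP; apply.
apply: connect_trans cu (connect1 _).
by rewrite /adj_ind uW vW uv uvS.
Qed.

Lemma comp_eq S W x y z : z \in comp S W x -> z \in comp S W y ->
  comp S W x = comp S W y.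
Proof.
rewrite !inE => cxz cyz.
have sym := sym_connect_sym (adj_ind_sym S W).
have cxy : connect (adj_ind S W) x y by apply: connect_trans cxz _; rewrite sym.
by apply/setP => w; rewrite !inE (same_connect sym cxy).
Qed.

Lemma three_groups S W : is_simple_graph S -> (0 < #|W|)%N ->
  (forall x, x \in W -> (2 * #|comp S W x| < #|W|)%N) ->
  exists X L, [/\ X \subset W, L \subset W, closedin S W X & closedin S W L] /\
    [/\ (2 * #|X| < #|W|)%N, (2 * #|L| < #|W|)%N & (#|W| <= 2 * #|X :|: L|)%N].
Proof.
move=> sS W0 hc.
suff: forall k Y, (#|Y| <= k)%N -> Y \subset W -> closedin S W Y ->
  (#|W| <= 2 * #|Y|)%N -> exists X L, [/\ X \subset Y, L \subset Y,
    closedin S W X & closedin S W L] /\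
    [/\ (2 * #|X| < #|W|)%N, (2 * #|L| < #|W|)%N & (#|W| <= 2 * #|X :|: L|)%N].
  move=> /(_ #|W| W (leqnn _) (subxx _) (closedinT S W)).
  case; first by rewrite leq_pmull.
  by move=> X [L [[? ? ? ?] [? ? ?]]]; exists X, L.
elim=> [|k IH] Y Yk YW cY WY.
  by move: Yk; rewrite leqn0 cards_eq0 => /eqP Y0; move: WY W0; rewrite Y0 cards0 muln0 leqn0 => /eqP ->.
have : (0 < #|Y|)%N.
  by rewrite lt0n; apply/negP => /eqP Y0; move: WY W0; rewrite Y0 muln0 leqn0 => /eqP ->.
case/card_gt0P => x xY.
have xW : x \in W by apply: (subsetP YW).
set L0 := comp S W x.
have L0Y : L0 \subset Y by apply: comp_sub cY xY.
have cL0 : closedin S W L0 by apply: comp_closed.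
set Y' := Y :\: L0.
have cY' : closedin S W Y' by apply: closedinD.
have Y'Y : Y' \subset Y by apply: subsetDl.
case: (ltnP (2 * #|Y'|) #|W|) => hY'.
  exists Y', L0; split; split => //; first exact: hc.
  apply: (leq_trans WY); rewrite leq_mul2l /=; apply: subset_leq_card.
  apply/subsetP => v vY; rewrite !inE vY andbT; by case: (connect _ _ _).
have Y'k : (#|Y'| <= k)%N.
  rewrite -ltnS; apply: leq_trans Yk; apply: proper_card; apply/properP; split => //.
  by exists x => //; rewrite !inE connect0.
have [X [L [[XY' LY' cX cL] [h1 h2 h3]]]] := IH Y' Y'k (subset_trans Y'Y YW) cY' hY'.
by exists X, L; split; split => //; apply: subset_trans Y'Y.
Qed.

Lemma bip_cover S A B X :
  (forall u v, u \in A -> v \in B -> (u \in X) != (v \in X) -> [set u; v] \notin S) ->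
  (e_bip S A B <= e_bip S (A :&: X) (B :&: X) + e_bip S (A :\: X) (B :\: X))%N.
Proof.
move=> h; rewrite /e_bip.
set E1 := [set e in S | _ ]; set E2 := [set e in S | _ ]; set E3 := [set e in S | _ ].
apply: (@leq_trans #|E2 :|: E3|); last by rewrite cardsU leq_subr.
apply: subset_leq_card.
apply/subsetP => e; rewrite !inE => /andP[eS /existsP[u /andP[uA /existsP[v /andP[vB /eqP E]]]]].
rewrite eS /=.
case uX: (u \in X); case vX: (v \in X).
- apply/orP; left; apply/existsP; exists u; rewrite !inE uA uX /=.
  by apply/existsP; exists v; rewrite !inE vB vX E eqxx.
- by move: (h u v uA vB); rewrite uX vX -E eS => /(_ isT).
- by move: (h u v uA vB); rewrite uX vX -E eS => /(_ isT).
- apply/orP; right; apply/existsP; exists u; rewrite !inE uA uX /=.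
  by apply/existsP; exists v; rewrite !inE vB vX E eqxx.
Qed.

Lemma e_ind_sub S G W : S \subset G -> (e_ind S W <= e_ind G W)%N.
Proof.
move=> SG; apply: subset_leq_card; apply/subsetP => e; rewrite !inE => /andP[eS ->].
by rewrite (subsetP SG).
Qed.

Lemma e_bip_sub S G A B : S \subset G -> (e_bip S A B <= e_bip G A B)%N.
Proof.
move=> SG; apply: subset_leq_card; apply/subsetP => e; rewrite !inE => /andP[eS ->].
by rewrite (subsetP SG).
Qed.

Lemma simple_sub S G : S \subset G -> is_simple_graph G -> is_simple_graph S.
Proof. by move=> SG sG e eS; apply: sG; apply: (subsetP SG). Qed.


Lemma unique_big S W x : x \in W -> (#|W| < 2 * #|comp S W x|)%N ->
  unique_largest_component W (adj_ind S W) (comp S W x).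
Proof.
move=> xW h; split; first by exists x.
move=> C' [y yW ->] neq.
have dis : forall z, z \in comp S W y -> z \in comp S W x -> False.
  by move=> z zy zx; apply: neq; apply: (comp_eq S W y x z).
have hU : (#|comp S W y :|: comp S W x| <= #|W|)%N.
  by apply: subset_leq_card; rewrite finset.subUset !comp_subW.
rewrite cardsU_dis // in hU.
rewrite -(ltn_add2r #|comp S W x|); apply: leq_ltn_trans hU _.
by rewrite addnn -mul2n.
Qed.

End Comb.

Lemma lin2 (R : realFieldType) (a b x y E : R) : a <= x + E -> b <= y + E -> a + b <= x + y + 2 * E.
Proof. lra. Qed.
Lemma lin3 (R : realFieldType) (a b c x y z E : R) : a <= x + E -> b <= y + E -> c <= z + E ->
  a + b + c <= x + y + z + 3 * E.
Proof. lra. Qed.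
Lemma lin_chain (R : realFieldType) (a b c b' c' X Y : R) : a <= b + c -> b <= b' -> c <= c' ->
  b' <= X -> c' <= Y -> a <= X + Y.
Proof. lra. Qed.

Lemma nat_h1 (u c b : nat) : (u + c <= b)%N -> (b < 2 * c)%N -> (2 * u <= b)%N.
Proof. lia. Qed.
Lemma nat_h2 (ax bx x c0 a b nn : nat) : (ax + bx = x)%N -> (x + c0 <= nn)%N ->
  (a <= 2 * ax)%N -> (b < 2 * bx)%N -> (a + b = nn)%N -> (nn < 2 * c0)%N -> False.
Proof. lia. Qed.
Lemma nat_h4 (a ax x c n : nat) : (a <= 2 * ax)%N -> (ax <= x)%N -> (x + c <= n)%N ->
  (a + 2 * c <= 2 * n)%N.
Proof. lia. Qed.
Lemma nat_h3 (a c x : nat) : (a < 2 * c)%N -> (c <= x)%N -> (a <= 2 * x)%N.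
Proof. lia. Qed.

Lemma A_B (R : realFieldType) (a b c0 nn th d : R) : a + b = nn -> a + 2 * c0 <= 2 * nn ->
  (th - d) * nn <= c0 -> 4 * d <= 2 * th - 1 -> 0 <= d -> 0 <= nn -> d * nn <= b.
Proof.
move=> h1 h2 h3 h4 h5 h6.
have h7 : 0 <= (2 * th - 1 - 3 * d) * nn by apply: mulr_ge0 => //; lra.
have e : (2 * th - 1 - 3 * d) * nn = 2 * ((th - d) * nn) - nn - d * nn by ring.
lra.
Qed.

Section Det.
Variables (R : realType) (n : nat) (G S : edge_set n) (p q eps eta d theta : R).
Implicit Types (U W X Y A B L : {set 'I_n}).
Hypothesis sG : is_simple_graph G.
Hypothesis SG : S \subset G.
Hypothesis qpos : 0 < q.
Hypothesis npos : (0 < n)%N.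
Hypothesis disc : forall U : {set 'I_n},
  `|(e_ind G U)%:R - q * (#|U|%:R ^+ 2 / 2)| <= eps ^+ 2 / 4 * q * n%:R ^+ 2.
Hypothesis hp : p = theta ^+ 2 + (1 - theta) ^+ 2.
Hypothesis hd : 0 < d.
Hypothesis hds : 4 * d <= 2 * theta - 1.
Hypothesis hd1 : d <= 1.
Hypothesis heps : eps = d ^+ 4.
Hypothesis hp1 : p <= 1.
Hypothesis heta : 0 <= eta <= eps ^+ 2.

Lemma eG_ub U : (e_ind G U)%:R <= q * (#|U|%:R ^+ 2 / 2) + eps ^+ 2 / 4 * q * n%:R ^+ 2.
Proof. by have := disc U; rewrite ler_norml => /andP[_ h]; lra. Qed.

Lemma eG_lb U : q * (#|U|%:R ^+ 2 / 2) - eps ^+ 2 / 4 * q * n%:R ^+ 2 <= (e_ind G U)%:R.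
Proof. by have := disc U; rewrite ler_norml => /andP[h _]; lra. Qed.


Lemma disj_dis A B : [disjoint A & B] -> forall x, x \in A -> x \in B -> False.
Proof. by move=> dAB x xA xB; move: dAB => /disjointFr/(_ xA); rewrite xB. Qed.

Lemma eGbip_bounds A B : [disjoint A & B] ->
  q * (#|A|%:R * #|B|%:R) - 3 / 4 * eps ^+ 2 * q * n%:R ^+ 2 <= (e_bip G A B)%:R /\
  (e_bip G A B)%:R <= q * (#|A|%:R * #|B|%:R) + 3 / 4 * eps ^+ 2 * q * n%:R ^+ 2.
Proof.
move=> dAB.
have h := e_ind_split n G A B sG dAB.
have hc : #|A :|: B| = (#|A| + #|B|)%N by apply: cardsU_dis; apply: disj_dis.
have eb : (e_bip G A B)%:R = (e_ind G (A :|: B))%:R - (e_ind G A)%:R - (e_ind G B)%:R :> R.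
  rewrite h !natrD; lra.
have u1 := eG_ub (A :|: B); have l1 := eG_lb (A :|: B).
have u2 := eG_ub A; have l2 := eG_lb A; have u3 := eG_ub B; have l3 := eG_lb B.
rewrite hc natrD in u1 l1.
set a := #|A|%:R in u1 l1 u2 l2 u3 l3 *; set b := #|B|%:R in u1 l1 u2 l2 u3 l3 *.
have E : q * ((a + b) ^+ 2 / 2) = q * (a ^+ 2 / 2) + q * (b ^+ 2 / 2) + q * (a * b) by field.
rewrite E in u1 l1; rewrite eb; split; lra.
Qed.


Let s := 2 * theta - 1.

Lemma hps : p = 1 / 2 + s ^+ 2 / 2.
Proof. by rewrite hp /s; field. Qed.

Lemma s4d : 4 * d <= s. Proof. exact: hds. Qed.

Lemma p_ge0 : 0 <= p.
Proof. by rewrite hp; apply: addr_ge0; apply: sqr_ge0. Qed.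

Lemma eps2_le (N : R) : 0 <= N -> eps ^+ 2 * N <= d ^+ 4 * N.
Proof.
move=> N0; apply: ler_wpM2r => //.
rewrite heps -exprM; have : d ^+ 4 <= 1 by apply: exprn_ile1 => //; apply: ltW.
move=> h; rewrite (_ : (4 * 2)%N = (4 + 4)%N) // exprD.
by apply: ler_piMl => //; apply: exprn_ge0; apply: ltW.
Qed.

Lemma arith3 (a b c w N : R) : 0 <= a -> 0 <= b -> 0 <= c -> a + b + c = w ->
  2 * a <= w -> 2 * b <= w -> 2 * c <= w -> d ^+ 2 * N <= w ^+ 2 -> 0 < N ->
  p * (q * (w ^+ 2 / 2) - eps ^+ 2 / 4 * q * N) - eta * q * N <=
    q * (a ^+ 2 / 2) + q * (b ^+ 2 / 2) + q * (c ^+ 2 / 2) + 3 * (eps ^+ 2 / 4 * q * N) ->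
  False.
Proof.
move=> a0 b0 c0 sw aw bw cw wN N0 H.
have H' : q * (p * (w ^+ 2 / 2) - p * (eps ^+ 2 / 4 * N) - eta * N) <=
          q * ((a ^+ 2 + b ^+ 2 + c ^+ 2) / 2 + 3 * (eps ^+ 2 / 4 * N)).
  have e1 : q * (p * (w ^+ 2 / 2) - p * (eps ^+ 2 / 4 * N) - eta * N) =
    p * (q * (w ^+ 2 / 2) - eps ^+ 2 / 4 * q * N) - eta * q * N by field.
  have e2 : q * ((a ^+ 2 + b ^+ 2 + c ^+ 2) / 2 + 3 * (eps ^+ 2 / 4 * N)) =
    q * (a ^+ 2 / 2) + q * (b ^+ 2 / 2) + q * (c ^+ 2 / 2) + 3 * (eps ^+ 2 / 4 * q * N) by field.
  by rewrite e1 e2.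
rewrite ler_pM2l // in H'.
have ha : a ^+ 2 <= a * w / 2.
  rewrite expr2 -mulrA; apply: ler_wpM2l => //; lra.
have hb : b ^+ 2 <= b * w / 2.
  rewrite expr2 -mulrA; apply: ler_wpM2l => //; lra.
have hc : c ^+ 2 <= c * w / 2.
  rewrite expr2 -mulrA; apply: ler_wpM2l => //; lra.
have hsum : a * w / 2 + b * w / 2 + c * w / 2 = w ^+ 2 / 2 by rewrite -sw; field.
have hs2 : 16 * d ^+ 2 <= s ^+ 2.
  have h := s4d; have d0 : 0 <= 4 * d by apply: mulr_ge0 => //; apply: ltW.
  have : (4 * d) * (4 * d) <= s * s by apply: ler_pM.
  have -> : (4 * d) * (4 * d) = 16 * d ^+ 2 by ring.
  by rewrite -expr2.
have hsw : 16 * (d ^+ 4 * N) <= s ^+ 2 * w ^+ 2.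
  have -> : 16 * (d ^+ 4 * N) = (16 * d ^+ 2) * (d ^+ 2 * N) by ring.
  apply: ler_pM => //; first by apply: mulr_ge0 => //; apply: sqr_ge0.
  by apply: mulr_ge0; [apply: sqr_ge0 | apply: ltW].
have ep : p * (eps ^+ 2 / 4 * N) <= eps ^+ 2 / 4 * N.
  apply: ler_piMl; last exact: hp1.
  by apply: mulr_ge0; [apply: mulr_ge0; [apply: sqr_ge0|lra]|apply: ltW].
have et : eta * N <= eps ^+ 2 * N.
  by apply: ler_wpM2r; [apply: ltW | case/andP: heta].
have e4 := eps2_le N (ltW N0).
have pw : p * (w ^+ 2 / 2) = w ^+ 2 / 4 + s ^+ 2 * w ^+ 2 / 4 by rewrite hps; field.
have d4N : 0 < d ^+ 4 * N by apply: mulr_gt0 => //; apply: exprn_gt0.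
lra.
Qed.


Lemma hs2 : 16 * d ^+ 2 <= s ^+ 2.
Proof.
have h := s4d; have d0 : 0 <= 4 * d by apply: mulr_ge0 => //; apply: ltW.
have : (4 * d) * (4 * d) <= s * s by apply: ler_pM.
have -> : (4 * d) * (4 * d) = 16 * d ^+ 2 by ring.
by rewrite -expr2.
Qed.

Lemma arith2 (c w N : R) : 0 <= c -> c <= w -> w <= 2 * c -> c <= (theta - d) * w ->
  d ^+ 2 * N <= w ^+ 2 -> 0 < N ->
  p * (q * (w ^+ 2 / 2) - eps ^+ 2 / 4 * q * N) - eta * q * N <=
    q * (c ^+ 2 / 2) + q * ((w - c) ^+ 2 / 2) + 2 * (eps ^+ 2 / 4 * q * N) ->
  False.
Proof.
move=> c0 cw wc ctd wN N0 H.
have H' : q * (p * (w ^+ 2 / 2) - p * (eps ^+ 2 / 4 * N) - eta * N) <=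
          q * ((c ^+ 2 + (w - c) ^+ 2) / 2 + 2 * (eps ^+ 2 / 4 * N)).
  have e1 : q * (p * (w ^+ 2 / 2) - p * (eps ^+ 2 / 4 * N) - eta * N) =
    p * (q * (w ^+ 2 / 2) - eps ^+ 2 / 4 * q * N) - eta * q * N by field.
  have e2 : q * ((c ^+ 2 + (w - c) ^+ 2) / 2 + 2 * (eps ^+ 2 / 4 * N)) =
    q * (c ^+ 2 / 2) + q * ((w - c) ^+ 2 / 2) + 2 * (eps ^+ 2 / 4 * q * N) by field.
  by rewrite e1 e2.
rewrite ler_pM2l // in H'.
have w0 : 0 <= w by lra.
have hs := s4d.
have X0 : 0 <= c - w / 2 by lra.
have X1 : c - w / 2 <= (s / 2 - d) * w.
  have -> : (s / 2 - d) * w = (theta - d) * w - w / 2 by rewrite /s; field.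
  lra.
have sd0 : 0 <= s / 2 - d. move: hs hd; rewrite /s => h1 h2. lra.
have hX : (c - w / 2) * (c - w / 2) <= ((s / 2 - d) * w) * ((s / 2 - d) * w).
  by apply: ler_pM.
have e3 : ((s / 2 - d) * w) * ((s / 2 - d) * w) =
  s ^+ 2 * w ^+ 2 / 4 - s * d * w ^+ 2 + d ^+ 2 * w ^+ 2 by field.
have e4 : c ^+ 2 + (w - c) ^+ 2 = w ^+ 2 / 2 + 2 * ((c - w / 2) * (c - w / 2)) by field.
have pw : p * (w ^+ 2 / 2) = w ^+ 2 / 4 + s ^+ 2 * w ^+ 2 / 4 by rewrite hps; field.
have h4 : 4 * (d ^+ 2 * w ^+ 2) <= s * d * w ^+ 2.
  have -> : 4 * (d ^+ 2 * w ^+ 2) = (4 * d) * (d * w ^+ 2) by ring.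
  have -> : s * d * w ^+ 2 = s * (d * w ^+ 2) by ring.
  apply: ler_wpM2r => //; apply: mulr_ge0; [apply: ltW | apply: sqr_ge0] => //.
have h5 : d ^+ 4 * N <= d ^+ 2 * w ^+ 2.
  have -> : d ^+ 4 * N = d ^+ 2 * (d ^+ 2 * N) by ring.
  by apply: ler_wpM2l => //; apply: sqr_ge0.
have ep : p * (eps ^+ 2 / 4 * N) <= eps ^+ 2 / 4 * N.
  apply: ler_piMl; last exact: hp1.
  by apply: mulr_ge0; [apply: mulr_ge0; [apply: sqr_ge0|lra]|apply: ltW].
have et : eta * N <= eps ^+ 2 * N.
  by apply: ler_wpM2r; [apply: ltW | case/andP: heta].
have e5 := eps2_le N (ltW N0).
have d4N : 0 < d ^+ 4 * N by apply: mulr_gt0 => //; apply: exprn_gt0.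
rewrite e4 pw in H'.
lra.
Qed.

Lemma arithB (a b x1 x2 nn : R) : 0 <= x1 -> x1 <= a -> 0 <= x2 -> x2 <= b ->
  a <= 2 * x1 -> 2 * x2 <= b -> d * nn <= a -> d * nn <= b -> 0 < nn ->
  p * (q * (a * b) - 3 / 4 * eps ^+ 2 * q * nn ^+ 2) - eta * q * nn ^+ 2 <=
    q * (x1 * x2) + 3 / 4 * eps ^+ 2 * q * nn ^+ 2 +
    (q * ((a - x1) * (b - x2)) + 3 / 4 * eps ^+ 2 * q * nn ^+ 2) ->
  False.
Proof.
move=> x10 x1a x20 x2b ax1 x2b' da db nn0 H.
set N := nn ^+ 2 in H.
have N0 : 0 < N by apply: exprn_gt0.
have H' : q * (p * (a * b) - 3 / 4 * p * (eps ^+ 2 * N) - eta * N) <=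
          q * (x1 * x2 + (a - x1) * (b - x2) + 3 / 2 * (eps ^+ 2 * N)).
  have e1 : q * (p * (a * b) - 3 / 4 * p * (eps ^+ 2 * N) - eta * N) =
    p * (q * (a * b) - 3 / 4 * eps ^+ 2 * q * N) - eta * q * N by field.
  have e2 : q * (x1 * x2 + (a - x1) * (b - x2) + 3 / 2 * (eps ^+ 2 * N)) =
    q * (x1 * x2) + 3 / 4 * eps ^+ 2 * q * N +
    (q * ((a - x1) * (b - x2)) + 3 / 4 * eps ^+ 2 * q * N) by field.
  by rewrite e1 e2.
rewrite ler_pM2l // in H'.
have hm : 0 <= (2 * x1 - a) * (b - 2 * x2) by apply: mulr_ge0; lra.
have dn0 : 0 <= d * nn by apply: mulr_ge0; apply: ltW.
have hab : (d * nn) * (d * nn) <= a * b by apply: ler_pM.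
have hs := hs2.
have h6 : 16 * (d ^+ 4 * N) <= s ^+ 2 * (a * b).
  have -> : 16 * (d ^+ 4 * N) = (16 * d ^+ 2) * ((d * nn) * (d * nn)) by rewrite /N; ring.
  apply: ler_pM => //; first by apply: mulr_ge0 => //; apply: sqr_ge0.
  by apply: mulr_ge0.
have pab : p * (a * b) = a * b / 2 + s ^+ 2 * (a * b) / 2 by rewrite hps; field.
have ep : p * (eps ^+ 2 * N) <= eps ^+ 2 * N.
  apply: ler_piMl; last exact: hp1.
  by apply: mulr_ge0; [apply: sqr_ge0|apply: ltW].
have et : eta * N <= eps ^+ 2 * N.
  by apply: ler_wpM2r; [apply: ltW | case/andP: heta].
have e5 := eps2_le N (ltW N0).
have d4N : 0 < d ^+ 4 * N by apply: mulr_gt0 => //; apply: exprn_gt0.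
lra.
Qed.


Let N := n%:R ^+ 2 : R.

Lemma N0 : 0 < N.
Proof. by apply: exprn_gt0; rewrite ltr0n. Qed.

Lemma eS_ub P : (e_ind S P)%:R <= q * (#|P|%:R ^+ 2 / 2) + eps ^+ 2 / 4 * q * N.
Proof.
apply: le_trans (eG_ub P); rewrite ler_nat; exact: e_ind_sub.
Qed.

Lemma wN_of (w : R) : d * n%:R <= w -> d ^+ 2 * N <= w ^+ 2.
Proof.
move=> h; have h0 : 0 <= d * n%:R by apply: mulr_ge0; [apply: ltW|].
have : (d * n%:R) * (d * n%:R) <= w * w by apply: ler_pM.
by rewrite /N -!expr2 exprMn.
Qed.

Lemma giant W : p * (e_ind G W)%:R - eta * q * N <= (e_ind S W)%:R ->
  d * n%:R <= #|W|%:R ->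
  exists2 x, x \in W & (theta - d) * #|W|%:R <= #|comp n S W x|%:R.
Proof.
move=> cW hW.
have sS := simple_sub n S G SG sG.
have wN := wN_of _ hW.
have LB : p * (q * (#|W|%:R ^+ 2 / 2) - eps ^+ 2 / 4 * q * N) - eta * q * N <=
          (e_ind S W)%:R.
  apply: le_trans cW; rewrite lerD2r; apply: ler_wpM2l; first exact: p_ge0.
  exact: eG_lb.
have W0 : (0 < #|W|)%N.
  rewrite -(ltr0n R); apply: lt_le_trans hW; apply: mulr_gt0 => //; rewrite ltr0n.
  exact: npos.
case: (boolP [exists x in W, (theta - d) * #|W|%:R <= #|comp n S W x|%:R]).
  by case/existsP => x /andP[xW h]; exists x.
rewrite negb_exists => /forallP hall; exfalso.
have hlt : forall x, x \in W -> #|comp n S W x|%:R < (theta - d) * #|W|%:R.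
  move=> x xW; move: (hall x); rewrite xW /= -real_ltNge //; apply: num_real.
case: (boolP [exists x in W, (#|W| <= 2 * #|comp n S W x|)%N]).
  case/existsP => x /andP[xW hx].
  have XW := comp_subW n S W x xW.
  have [e1 e2] := split_closed n S W (comp n S W x) sS XW (comp_closed n S W x xW).
  apply: (arith2 (#|comp n S W x|%:R) (#|W|%:R) N) => //.
  - by rewrite ler_nat; apply: subset_leq_card.
  - by rewrite -natrM ler_nat.
  - exact: ltW (hlt x xW).
  - exact: N0.
  apply: le_trans LB _; rewrite e1 natrD.
  have -> : #|W|%:R - #|comp n S W x|%:R = #|W :\: comp n S W x|%:R :> R.
    by rewrite e2 natrD; ring.
  exact: lin2 (eS_ub (comp n S W x)) (eS_ub (W :\: comp n S W x)).
rewrite negb_exists => /forallP h2.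
have hc : forall x, x \in W -> (2 * #|comp n S W x| < #|W|)%N.
  by move=> x xW; move: (h2 x); rewrite xW /= -ltnNge.
have [X [L [[XW LW cX cL] [h1 h2' h3]]]] := three_groups n S W sS W0 hc.
set Y := X :|: L.
have YW : Y \subset W by rewrite finset.subUset XW LW.
have cY : closedin n S W Y by apply: closedinU.
have XY : X \subset Y by apply: finset.subsetUl.
have [e1 e2] := split_closed n S W Y sS YW cY.
have [e3 e4] := split_closed n S Y X sS XY (closedin_sub n S W Y X cX YW).
have hYX : (#|Y :\: X| <= #|L|)%N.
  apply: subset_leq_card; apply/subsetP => v; rewrite !inE.
  by case: (v \in X); case: (v \in L).
apply: (arith3 (#|X|%:R) (#|Y :\: X|%:R) (#|W :\: Y|%:R) (#|W|%:R) N) => //.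
- by rewrite e2 e4 !natrD.
- by rewrite -natrM ler_nat; apply: ltnW.
- rewrite -natrM ler_nat; apply: leq_trans (ltnW h2').
  by rewrite leq_mul2l hYX orbT.
- rewrite -natrM ler_nat; move: h3; rewrite e2 mul2n -addnn leq_add2l => h.
  by rewrite mul2n -addnn leq_add2r.
- exact: N0.
apply: le_trans LB _; rewrite e1 e3 !natrD.
exact: lin3 (eS_ub X) (eS_ub (Y :\: X)) (eS_ub (W :\: Y)).
Qed.

Lemma bipart A B X : [disjoint A & B] ->
  p * (e_bip G A B)%:R - eta * q * N <= (e_bip S A B)%:R ->
  (forall u v, u \in A -> v \in B -> (u \in X) != (v \in X) -> [set u; v] \notin S) ->
  (#|A| <= 2 * #|A :&: X|)%N -> (2 * #|B :&: X| <= #|B|)%N ->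
  d * n%:R <= #|A|%:R -> d * n%:R <= #|B|%:R -> False.
Proof.
move=> dAB cAB hX hA hB dA dB.
have hcov := bip_cover n S A B X hX.
have d1 : [disjoint A :&: X & B :&: X].
  by apply: disjointW dAB; apply: finset.subsetIl.
have d2 : [disjoint A :\: X & B :\: X].
  by apply: disjointW dAB; apply: finset.subsetDl.
have [_ u1] := eGbip_bounds _ _ d1.
have [_ u2] := eGbip_bounds _ _ d2.
have [l0 _] := eGbip_bounds _ _ dAB.
have s1 := e_bip_sub n S G (A :&: X) (B :&: X) SG.
have s2 := e_bip_sub n S G (A :\: X) (B :\: X) SG.
have cA := cardsID X A; have cB := cardsID X B.
apply: (arithB (#|A|%:R) (#|B|%:R) (#|A :&: X|%:R) (#|B :&: X|%:R) (n%:R)) => //.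
- by rewrite ler_nat; apply: subset_leq_card; apply: finset.subsetIl.
- by rewrite ler_nat; apply: subset_leq_card; apply: finset.subsetIl.
- by rewrite -natrM ler_nat.
- by rewrite -natrM ler_nat.
- by rewrite ltr0n.
have eA : #|A :\: X|%:R = #|A|%:R - #|A :&: X|%:R :> R by rewrite -cA natrD; ring.
have eB : #|B :\: X|%:R = #|B|%:R - #|B :&: X|%:R :> R by rewrite -cB natrD; ring.
rewrite eA eB in u2.
have LB : p * (q * (#|A|%:R * #|B|%:R) - 3 / 4 * eps ^+ 2 * q * n%:R ^+ 2) - eta * q * n%:R ^+ 2 <=
          (e_bip S A B)%:R.
  apply: le_trans cAB; rewrite lerD2r; apply: ler_wpM2l; first exact: p_ge0.
  exact: l0.
apply: le_trans LB _.
have : (e_bip S A B)%:R <= (e_bip S (A :&: X) (B :&: X))%:R + (e_bip S (A :\: X) (B :\: X))%:R :> R.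
  by rewrite -natrD ler_nat.
move: s1 s2; rewrite -!(ler_nat R) => s1 s2 h.
exact: lin_chain h s1 s2 u1 u2.
Qed.


Variable part : 'I_n -> 'I_3.
Definition Vs (T : {set 'I_3}) := [set v | part v \in T].
Hypothesis hth : theta = (1 + Num.sqrt (2 * p - 1)) / 2.
Hypothesis hdd : d = eps `^ (4^-1).
Hypothesis hd14 : 4 * d <= 1.
Hypothesis concI : forall T : {set 'I_3},
  p * (e_ind G (Vs T))%:R - eta * q * N <= (e_ind S (Vs T))%:R.
Hypothesis concB : forall T1 T2 : {set 'I_3},
  p * (e_bip G (Vs T1) (Vs T2))%:R - eta * q * N <= (e_bip S (Vs T1) (Vs T2))%:R.

Lemma Vpart_Vs i : Vpart part i = Vs [set i].
Proof. by apply/setP => v; rewrite !inE. Qed.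

Lemma VsT : Vs [set: 'I_3] = [set: 'I_n].
Proof. by apply/setP => v; rewrite !inE. Qed.

Lemma VsC i : Vs (~: [set i]) = ~: Vs [set i].
Proof. by apply/setP => v; rewrite !inE. Qed.

Lemma Vs_disj i j : i != j -> [disjoint Vs [set i] & Vs [set j]].
Proof.
move=> ij; rewrite -setI_eq0; apply/eqP/setP => v; rewrite !inE.
by apply/negbTE/negP => /andP[/eqP -> /eqP E]; rewrite E eqxx in ij.
Qed.

Lemma disjC A : [disjoint A & ~: A].
Proof. by rewrite -setI_eq0 finset.setICr. Qed.

Lemma thd : 1 / 2 < theta - d.
Proof.
have h1 : 4 * d <= 2 * theta - 1 by exact: hds.
have h2 : 0 < d by exact: hd.
lra.
Qed.

Lemma half_lt (w c : nat) : d * n%:R <= w%:R -> (theta - d) * w%:R <= c%:R ->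
  (w < 2 * c)%N.
Proof.
move=> hw hc.
have w0 : 0 < w%:R :> R.
  apply: lt_le_trans hw; apply: mulr_gt0 => //; by rewrite ltr0n.
have h1 : 0 < (2 * (theta - d) - 1) * w%:R by apply: mulr_gt0 => //; have := thd; lra.
rewrite -(ltr_nat R) natrM.
have : (2 * (theta - d) - 1) * w%:R = 2 * ((theta - d) * w%:R) - w%:R :> R by ring.
move=> e; rewrite e in h1; lra.
Qed.

Lemma P1 i : p * q * (#|Vs [set i]|%:R ^+ 2 / 2) - eps * q * N <= (e_ind S (Vs [set i]))%:R.
Proof.
have h : p * (e_ind G (Vs [set i]))%:R - eta * q * N <= (e_ind S (Vs [set i]))%:R by exact: concI.
have l := eG_lb (Vs [set i]).
have pl : p * (q * (#|Vs [set i]|%:R ^+ 2 / 2) - eps ^+ 2 / 4 * q * N) <= p * (e_ind G (Vs [set i]))%:R.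
  by apply: ler_wpM2l => //; exact: p_ge0.
have qN : 0 <= q * N by apply: mulr_ge0; [apply: ltW | apply: ltW; exact: N0].
have e0 : 0 <= eps by rewrite heps; apply: exprn_ge0; apply: ltW.
have e1 : eps <= 4^-1.
  rewrite heps; have d0 : 0 <= d by apply: ltW.
  have h14 : 4 * d <= 1 by exact: hd14.
  have hd4 : d ^+ 4 <= d.
    rewrite exprS; apply: ler_piMr => //; apply: exprn_ile1 => //; lra.
  lra.
have pe : p * (eps ^+ 2 / 4 * (q * N)) <= eps ^+ 2 / 4 * (q * N).
  apply: ler_piMl; last exact: hp1.
  by apply: mulr_ge0 => //; apply: mulr_ge0; [apply: sqr_ge0 | lra].
have et : eta * (q * N) <= eps ^+ 2 * (q * N).
  by apply: ler_wpM2r => //; case/andP: heta.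
have ee : eps ^+ 2 * (q * N) <= eps / 4 * (q * N).
  apply: ler_wpM2r => //; rewrite expr2; apply: ler_wpM2l => //.
have E1 : p * (q * (#|Vs [set i]|%:R ^+ 2 / 2) - eps ^+ 2 / 4 * q * N) =
  p * q * (#|Vs [set i]|%:R ^+ 2 / 2) - p * (eps ^+ 2 / 4 * (q * N)) by ring.
have E2 : eps * q * N = eps * (q * N) by ring.
have E3 : eta * q * N = eta * (q * N) by ring.
rewrite E1 in pl; rewrite E3 in h; rewrite E2.
have E4 : eps ^+ 2 / 4 * (q * N) = (eps ^+ 2 * (q * N)) / 4 by ring.
have E5 : eps / 4 * (q * N) = eps * (q * N) / 4 by ring.
rewrite E4 in pe; rewrite E5 in ee.
have eQ : 0 <= eps * (q * N) by apply: mulr_ge0.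
lra.
Qed.

Lemma P2 i j : i != j ->
  p * q * (#|Vs [set i]|%:R * #|Vs [set j]|%:R) - eps * q * N <=
  (e_bip S (Vs [set i]) (Vs [set j]))%:R.
Proof.
move=> ij.
have h : p * (e_bip G (Vs [set i]) (Vs [set j]))%:R - eta * q * N <=
  (e_bip S (Vs [set i]) (Vs [set j]))%:R by exact: concB.
have [l _] := eGbip_bounds _ _ (Vs_disj i j ij).
set a := #|Vs [set i]|%:R in l *; set b := #|Vs [set j]|%:R in l *.
have pl : p * (q * (a * b) - 3 / 4 * eps ^+ 2 * q * N) <= p * (e_bip G (Vs [set i]) (Vs [set j]))%:R.
  by apply: ler_wpM2l => //; exact: p_ge0.
have qN : 0 <= q * N by apply: mulr_ge0; [apply: ltW | apply: ltW; exact: N0].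
have e0 : 0 <= eps by rewrite heps; apply: exprn_ge0; apply: ltW.
have e1 : eps <= 4^-1.
  rewrite heps; have d0 : 0 <= d by apply: ltW.
  have h14 : 4 * d <= 1 by exact: hd14.
  have hd4 : d ^+ 4 <= d.
    rewrite exprS; apply: ler_piMr => //; apply: exprn_ile1 => //; lra.
  lra.
have pe : p * (eps ^+ 2 * (q * N)) <= eps ^+ 2 * (q * N).
  apply: ler_piMl; last exact: hp1.
  by apply: mulr_ge0 => //; apply: sqr_ge0.
have et : eta * (q * N) <= eps ^+ 2 * (q * N).
  by apply: ler_wpM2r => //; case/andP: heta.
have ee : eps ^+ 2 * (q * N) <= eps / 4 * (q * N).
  apply: ler_wpM2r => //; rewrite expr2; apply: ler_wpM2l => //.
have E5 : eps / 4 * (q * N) = eps * (q * N) / 4 by ring.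
rewrite E5 in ee.
have E1 : p * (q * (a * b) - 3 / 4 * eps ^+ 2 * q * N) =
  p * q * (a * b) - 3 / 4 * (p * (eps ^+ 2 * (q * N))) by ring.
have E2 : eps * q * N = eps * (q * N) by ring.
have E3 : eta * q * N = eta * (q * N) by ring.
rewrite E1 in pl; rewrite E3 in h; rewrite E2.
have eQ : 0 <= eps * (q * N) by apply: mulr_ge0.
lra.
Qed.

Lemma P4 i j x y : i != j -> d * n%:R <= #|Vs [set i]|%:R -> d * n%:R <= #|Vs [set j]|%:R ->
  x \in Vs [set i] -> y \in Vs [set j] ->
  (theta - d) * #|Vs [set i]|%:R <= #|comp n S (Vs [set i]) x|%:R ->
  (theta - d) * #|Vs [set j]|%:R <= #|comp n S (Vs [set j]) y|%:R ->
  exists a b, [/\ a \in comp n S (Vs [set i]) x, b \in comp n S (Vs [set j]) y &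
    connect (adj_bip S (Vs [set i]) (Vs [set j])) a b].
Proof.
move=> ij hbi hbj xV yV hCi hCj.
set A := Vs [set i] in hbi xV hCi *; set B := Vs [set j] in hbj yV hCj *.
set Ci := comp n S A x in hCi *; set Cj := comp n S B y in hCj *.
have dAB : [disjoint A & B] by exact: Vs_disj.
have hA := half_lt _ _ hbi hCi.
have hB := half_lt _ _ hbj hCj.
set r := adj_bip S A B.
case: (boolP [exists a in Ci, exists b in Cj, connect r a b]).
  by case/existsP => a /andP[aC /existsP[b /andP[bC c]]]; exists a, b.
rewrite negb_exists => /forallP hn; exfalso.
set X := [set v | [exists a in Ci, connect r a v]].
have memX : forall v, (v \in X) = [exists a in Ci, connect r a v] by move=> v; rewrite inE.
have CiX : Ci \subset A :&: X.
  apply/subsetP => v vC; rewrite finset.in_setI memX (subsetP (comp_subW n S A x xV)) //=.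
  by apply/existsP; exists v; rewrite vC connect0.
have dis : forall z, z \in B :&: X -> z \in Cj -> False.
  move=> z; rewrite finset.in_setI memX => /andP[_ /existsP[a /andP[aC caz]]] zC.
  by move: (hn a); rewrite aC /= negb_exists => /forallP/(_ z); rewrite zC caz.
apply: (bipart A B X dAB _ _ _ _ hbi hbj).
- by rewrite /A /B; exact: concB.
- move=> u v uA vB hneq; apply/negP => uvS.
  have uv : u != v by apply/eqP => E; subst v; apply: (disj_dis _ _ dAB u).
  have r1 : r u v by rewrite /r /adj_bip uA vB uv uvS.
  have r2 : r v u by rewrite /r /adj_bip uA vB eq_sym uv setUC uvS orbT.
  move: hneq; rewrite !memX.
  case: (boolP [exists a in Ci, connect r a u]) => hu;
    case: (boolP [exists a in Ci, connect r a v]) => hv //= _.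
  + move/existsP: hu => [a /andP[aC cau]]; move/negP: hv; apply; apply/existsP; exists a.
    by rewrite aC /=; exact: connect_trans cau (connect1 r1).
  + move/existsP: hv => [a /andP[aC cav]]; move/negP: hu; apply; apply/existsP; exists a.
    by rewrite aC /=; exact: connect_trans cav (connect1 r2).
- by apply: nat_h3 hA _; apply: subset_leq_card.
- apply: nat_h1 _ hB.
  rewrite -cardsU_dis //; apply: subset_leq_card.
  by rewrite finset.subUset finset.subsetIl comp_subW.
Qed.

Lemma dn_le_n : d * n%:R <= n%:R.
Proof.
have h : d <= 1 by exact: hd1.
rewrite -[X in _ <= X]mul1r; apply: ler_wpM2r => //.
Qed.

Lemma P5sub i x z0 : d * n%:R <= #|Vs [set i]|%:R -> x \in Vs [set i] ->
  (theta - d) * #|Vs [set i]|%:R <= #|comp n S (Vs [set i]) x|%:R ->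
  (theta - d) * n%:R <= #|comp n S [set: 'I_n] z0|%:R ->
  comp n S (Vs [set i]) x \subset comp n S [set: 'I_n] z0.
Proof.
move=> hbi xV hCi hC0.
set A := Vs [set i] in hbi xV hCi *.
set Ci := comp n S A x in hCi *.
set C0 := comp n S [set: 'I_n] z0 in hC0 *.
apply/subsetP => z zCi; apply/negPn/negP => zC0.
set X := comp n S [set: 'I_n] z.
have hA := half_lt _ _ hbi hCi.
have hn : (n < 2 * #|C0|)%N by apply: half_lt dn_le_n hC0.
have sym := sym_connect_sym (adj_ind_sym n S A).
have CiX : Ci \subset X.
  apply/subsetP => v; rewrite !inE => cxv.
  have czv : connect (adj_ind S A) z v.
    by apply: connect_trans _ cxv; rewrite sym; move: zCi; rewrite inE.
  have sub : subrel (adj_ind S A) (connect (adj_ind S [set: 'I_n])).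
    move=> a b; rewrite /adj_ind => /and4P[_ _ ab abS].
    by apply: connect1; rewrite /adj_ind !in_setT ab abS.
  exact: (connect_sub sub czv).
have dX0 : forall w, w \in X -> w \in C0 -> False.
  move=> w wX wC0; have E := comp_eq n S [set: 'I_n] z z0 w wX wC0.
  by move: zC0; rewrite /C0 -E comp_self.
have clX := comp_closed n S [set: 'I_n] z (in_setT z).
have CiAX : Ci \subset A :&: X.
  by rewrite finset.subsetI CiX comp_subW.
have hAX : (#|A| <= 2 * #|A :&: X|)%N by apply: nat_h3 hA _; apply: subset_leq_card.
have hXC : (#|X| + #|C0| <= n)%N.
  rewrite -cardsU_dis //; apply: leq_trans (max_card _) _; by rewrite card_ord.
have cID := cardsID A X.
have cC : (#|A| + #|~: A| = n)%N by rewrite cardsC card_ord.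
have BX : ~: A :&: X = X :\: A by rewrite finset.setDE finset.setIC.
have AX : A :&: X = X :&: A by rewrite finset.setIC.
apply: (bipart A (~: A) X (disjC A) _ _ hAX _ hbi _).
- by rewrite /A -VsC; exact: concB.
- move=> u v uA vB hneq; case uX: (u \in X) hneq; case vX: (v \in X) => //= _.
  + by apply: clX => //; rewrite ?in_setT ?vX.
  + by rewrite setUC; apply: clX => //; rewrite ?in_setT ?uX.
- rewrite leqNgt; apply/negP => hlt.
  apply: (nat_h2 #|X :&: A| #|X :\: A| #|X| #|C0| #|A| #|~: A| n) => //.
  + by rewrite -AX.
  + by rewrite -BX.
- have h1 : (#|A| + 2 * #|C0| <= 2 * n)%N.
    have : (#|A :&: X| <= #|X|)%N by apply: subset_leq_card; apply: finset.subsetIr.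
    by move=> h2; apply: nat_h4 hAX h2 hXC.
  have h1' : #|A|%:R + 2 * #|C0|%:R <= 2 * n%:R :> R.
    by rewrite -natrM -natrD -natrM ler_nat.
  have h2' : #|A|%:R + #|~: A|%:R = n%:R :> R by rewrite -natrD cC.
  have h4 : 4 * d <= 2 * theta - 1 by exact: hds.
  have h5 : 0 <= d by apply: ltW; exact: hd.
  have h6 : 0 <= n%:R :> R by apply: ler0n.
  exact: (A_B _ _ _ _ _ _ _ h2' h1' hC0 h4 h5 h6).
Qed.

Theorem good : good_event p q eps part S.
Proof.
rewrite /good_event /= -hth -hdd.
have VP : Vpart part = (fun i => Vs [set i]) by apply: funext => i; exact: Vpart_Vs.
rewrite VP.
split; first by move=> i; exact: P1.
split; first by move=> i j ij; apply: P2; rewrite neq_ltn ij.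
have hC : forall i : 'I_3, exists C : {set 'I_n}, d * n%:R <= #|Vs [set i]|%:R ->
  exists2 x, x \in Vs [set i] & C = comp n S (Vs [set i]) x /\
    (theta - d) * #|Vs [set i]|%:R <= #|C|%:R.
  move=> i; case: (boolP (d * n%:R <= #|Vs [set i]|%:R)) => hb.
    have [x xV hx] := giant (Vs [set i]) (concI [set i]) hb.
    by exists (comp n S (Vs [set i]) x) => _; exists x.
  by exists finset.set0 => h; exfalso; move/negP: hb; apply.
case: (choice hC) => Cs hCs.
exists Cs; split.
  move=> i hb; have [x xV [-> hx]] := hCs i hb; split => //.
  by apply: unique_big => //; exact: half_lt hb hx.
split.
  move=> i j ij hbi hbj.
  have [x xV [-> hx]] := hCs i hbi; have [y yV [-> hy]] := hCs j hbj.
  have ij' : i != j by rewrite neq_ltn ij.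
  have [a [b [aC bC c]]] := P4 i j x y ij' hbi hbj xV yV hx hy.
  by exists a, b.
have cT : p * (e_ind G [set: 'I_n])%:R - eta * q * N <= (e_ind S [set: 'I_n])%:R.
  by rewrite -VsT; exact: concI.
have cardT : #|[set: 'I_n]| = n by rewrite cardsT card_ord.
have hbT : d * n%:R <= #|[set: 'I_n]|%:R by rewrite cardT; exact: dn_le_n.
have [z0 _ hz0] := giant [set: 'I_n] cT hbT.
rewrite cardT in hz0.
exists (comp n S [set: 'I_n] z0); split.
- apply: unique_big; first exact: in_setT.
  by rewrite cardT; apply: half_lt dn_le_n hz0.
- apply: le_trans hz0; apply: ler_wpM2r => //.
  have : 0 <= d by apply: ltW; exact: hd.
  move=> h; lra.
- move=> i hb; have [x xV [-> hx]] := hCs i hb.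
  exact: P5sub.
Qed.

End Det.

Section Prob.
Variables (R : realType) (n : nat) (G : edge_set n) (mu : {ffun edge_set n -> R}) (p : R).
Hypothesis hM : M1p p G mu.
Hypothesis sG : is_simple_graph G.
Hypothesis p01 : 0 <= p <= 1.
Implicit Types (S F : edge_set n) (e f : {set 'I_n}).

Lemma mu_ge0 S : 0 <= mu S. Proof. by case: hM => [[h _] _]. Qed.
Lemma mu_sum1 : \sum_S mu S = 1. Proof. by case: hM => [[_ [h _]] _]. Qed.
Lemma mu_supp S : mu S != 0 -> S \subset G. Proof. by case: hM => [[_ [_ h]] _]; apply: h. Qed.
Lemma marg e : e \in G -> Prob mu (fun S => e \in S) = p.
Proof. by case: hM => _ [_ h]; apply: h. Qed.

Lemma Prob_ext P Q : (forall S, P S <-> Q S) -> Prob mu P = Prob mu Q.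
Proof. by move=> h; apply: eq_bigl => S; apply/asboolP/asboolP; apply h. Qed.

Lemma Prob_sum P : Prob mu P = \sum_S mu S * (`[< P S >] : nat)%:R.
Proof.
rewrite /Prob big_mkcond; apply: eq_bigr => S _.
by case: (`[< P S >]); rewrite ?mulr1 ?mulr0.
Qed.

Definition ind e S : R := (e \in S : nat)%:R.

Lemma marg_sum e : e \in G -> \sum_S mu S * ind e S = p.
Proof.
move=> eG; rewrite -(marg e eG) Prob_sum; apply: eq_bigr => S _; congr (_ * _).
by rewrite /ind; case: asboolP => [->|/negP/negbTE ->].
Qed.

Lemma setI1_iff S e : (S :&: [set e] = [set e]) <-> e \in S.
Proof.
split => [h|h].
  have : e \in S :&: [set e] by rewrite h !inE eqxx.
  by rewrite inE => /andP[].
apply/setP => x; rewrite !inE; case: eqP => [->|_]; by rewrite ?h ?andbF.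
Qed.

Lemma pair_prob e f : e \in G -> f \in G -> [disjoint e & f] ->
  Prob mu (fun S => e \in S /\ f \in S) = p * p.
Proof.
move=> eG fG def.
case: hM => _ [hind _].
have h := hind ([set e] : edge_set n) ([set f] : edge_set n).
rewrite !sub1set eG fG /vspan !big_set1 in h.
have {h} := h isT isT def [set e] [set f].
rewrite (Prob_ext (fun S => e \in S /\ f \in S) (fun S => S :&: [set e] = [set e] /\ S :&: [set f] = [set f])); last first.
  by move=> S; rewrite !setI1_iff.
move=> ->; congr (_ * _).
  by rewrite -(marg e eG); apply: Prob_ext => S; exact: setI1_iff.
by rewrite -(marg f fG); apply: Prob_ext => S; exact: setI1_iff.
Qed.

Lemma mom_pair e f : e \in G -> f \in G -> [disjoint e & f] ->
  \sum_S mu S * ((ind e S - p) * (ind f S - p)) = 0.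
Proof.
move=> eG fG def.
have e1 : \sum_S mu S * (ind e S * ind f S) = p * p.
  rewrite -(pair_prob e f) // Prob_sum; apply: eq_bigr => S _; congr (_ * _).
  rewrite /ind; case: asboolP => [[-> ->]|]; first by rewrite mulr1.
  by case: (e \in S); case: (f \in S); rewrite ?mulr0 ?mul0r // => [[]].
have e2 := marg_sum e eG; have e3 := marg_sum f fG.
have h : forall S, mu S * ((ind e S - p) * (ind f S - p)) =
  mu S * (ind e S * ind f S) - p * (mu S * ind e S) - p * (mu S * ind f S) + p * p * mu S.
  by move=> S; ring.
rewrite (eq_bigr _ (fun S _ => h S)) big_split /= !sumrB -!mulr_sumr e1 e2 e3 mu_sum1.
ring.
Qed.

Lemma mom_le1 e f : \sum_S mu S * ((ind e S - p) * (ind f S - p)) <= 1.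
Proof.
rewrite -mu_sum1; apply: ler_sum => S _; rewrite -[X in _ <= X]mulr1.
apply: ler_wpM2l; first exact: mu_ge0. case/andP: p01 => p0 p1.
by rewrite /ind; case: (e \in S); case: (f \in S); rewrite /=; nra.
Qed.

Lemma card_sum S F : (#|S :&: F|)%:R = \sum_(e in F) ind e S :> R.
Proof.
rewrite -sum1_card natr_sum big_mkcond /= [RHS]big_mkcond /=.
apply: eq_bigr => e _; rewrite !inE /ind.
by case: (e \in S); case: (e \in F).
Qed.

Lemma second_moment F : F \subset G ->
  \sum_S mu S * ((#|S :&: F|)%:R - p * #|F|%:R) ^+ 2 <=
  \sum_(e in F) \sum_(f in F) (~~ [disjoint e & f] : nat)%:R.
Proof.
move=> FG.
have h1 S : (#|S :&: F|)%:R - p * #|F|%:R = \sum_(e in F) (ind e S - p).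
  by rewrite card_sum sumrB sumr_const mulr_natr.
rewrite (eq_bigr (fun S => \sum_(e in F) \sum_(f in F) mu S * ((ind e S - p) * (ind f S - p)))); last first.
  move=> S _; rewrite h1 expr2 big_distrlr mulr_sumr; apply: eq_bigr => e _.
  by rewrite mulr_sumr.
rewrite exchange_big; apply: ler_sum => e eF; rewrite exchange_big; apply: ler_sum => f fF.
case: (boolP [disjoint e & f]) => def /=.
  by rewrite mom_pair //; apply: (subsetP FG).
by rewrite mom_le1.
Qed.


Lemma nbr_card e : e \in G ->
  (\sum_(f in G) (~~ [disjoint e & f] : nat) <= 2 * n)%N.
Proof.
move=> eG.
have [x [y [xy Exy]]] : exists x y, x != y /\ e = [set x; y] by apply/cards2P; rewrite sG.
rewrite (eq_bigr (fun f => if ~~ [disjoint e & f] then 1%N else 0%N)) //.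
rewrite -big_mkcondr sum1_card.
set Ix := [set [set x; w] | w : 'I_n]; set Iy := [set [set y; w] | w : 'I_n].
apply: (@leq_trans #|Ix :|: Iy|).
  apply: subset_leq_card; apply/subsetP => f; rewrite !inE => /andP[fG].
  rewrite -setI_eq0 => /set0Pn[z]; rewrite inE => /andP[ze zf].
  have [a [b [ab Eab]]] : exists a b, a != b /\ f = [set a; b] by apply/cards2P; rewrite sG.
  have hz : exists w, f = [set z; w].
    move: zf; rewrite Eab !inE => /orP[]/eqP->; first by exists b.
    by exists a; rewrite setUC.
  case: hz => w Ef.
  move: ze; rewrite Exy !inE => /orP[]/eqP Ez; subst z.
  - by apply/orP; left; apply/imsetP; exists w.
  - by apply/orP; right; apply/imsetP; exists w.
apply: leq_trans (leq_card_setU Ix Iy) _.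
rewrite mul2n -addnn leq_add //.
- by apply: leq_trans (leq_imset_card _ _) _; rewrite card_ord.
- by apply: leq_trans (leq_imset_card _ _) _; rewrite card_ord.
Qed.

Lemma count_pairs F : F \subset G ->
  \sum_(e in F) \sum_(f in F) (~~ [disjoint e & f] : nat)%:R <= (2 * n * #|G|)%:R :> R.
Proof.
move=> FG.
rewrite -(eq_bigr _ (fun e _ => natr_sum _ _ _ _)) -natr_sum ler_nat.
apply: (@leq_trans (\sum_(e in G) \sum_(f in G) (~~ [disjoint e & f] : nat))).
  apply: leq_trans (_ : _ <= \sum_(e in F) \sum_(f in G) (~~ [disjoint e & f] : nat))%N _.
    by apply: leq_sum => e _; apply: sub_le_big => //; [move=> a b; apply: leq_addr | apply/subsetP].
  by apply: sub_le_big => //; [move=> a b; apply: leq_addr | apply/subsetP].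
apply: leq_trans (_ : _ <= \sum_(e in G) (2 * n))%N _.
  by apply: leq_sum => e eG; apply: nbr_card.
by rewrite sum_nat_const mulnC.
Qed.

Lemma cheb F t : F \subset G -> 0 < t ->
  Prob mu (fun S => (#|S :&: F|)%:R < p * #|F|%:R - t) <= (2 * n * #|G|)%:R / t ^+ 2.
Proof.
move=> FG t0.
set c := p * #|F|%:R.
rewrite Prob_sum.
apply: (@le_trans _ _ (\sum_S mu S * (((#|S :&: F|)%:R - c) ^+ 2 / t ^+ 2))).
  apply: ler_sum => S _; apply: ler_wpM2l; first exact: mu_ge0.
  case: asboolP => h /=.
    rewrite ler_pdivlMr ?exprn_gt0 // mul1r.
    have h0 : 0 <= t by apply: ltW.
    have : t * t <= (c - (#|S :&: F|)%:R) * (c - (#|S :&: F|)%:R).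
      by apply: ler_pM => //; lra.
    by rewrite -!expr2 => h'; apply: le_trans h' _; rewrite -sqrrN opprB.
  by apply: divr_ge0; apply: sqr_ge0.
rewrite (eq_bigr (fun S => mu S * ((#|S :&: F|)%:R - c) ^+ 2 / t ^+ 2)); last first.
  by move=> S _; rewrite mulrA.
rewrite -mulr_suml ler_pM2r ?invr_gt0 ?exprn_gt0 //.
apply: le_trans (second_moment F FG) _.
exact: count_pairs.
Qed.


Lemma Prob_le1 P : Prob mu P <= 1.
Proof.
rewrite Prob_sum -[X in _ <= X]mu_sum1; apply: ler_sum => S _.
rewrite -[X in _ <= X]mulr1; apply: ler_wpM2l; first exact: mu_ge0.
by case: (`[< P S >]); rewrite /= ?mulr1n ?mulr0n ?ler01 ?lexx.
Qed.

Lemma Prob_ge0 P : 0 <= Prob mu P.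
Proof. by apply: sumr_ge0 => S _; exact: mu_ge0. Qed.

Lemma union_bound (I : finType) (good : edge_set n -> Prop) (bad : I -> edge_set n -> Prop) :
  (forall S, mu S != 0 -> (forall i, ~ bad i S) -> good S) ->
  1 - \sum_i Prob mu (bad i) <= Prob mu good.
Proof.
move=> h.
have -> : \sum_i Prob mu (bad i) = \sum_S mu S * \sum_i (`[< bad i S >] : nat)%:R.
  under eq_bigr do rewrite Prob_sum.
  by rewrite exchange_big; apply: eq_bigr => S _; rewrite mulr_sumr.
rewrite -[X in X - _ <= _]mu_sum1 Prob_sum lerBlDr -big_split /=; apply: ler_sum => S _.
have m0 := mu_ge0 S.
have s0 : 0 <= \sum_i (`[< bad i S >] : nat)%:R :> R by apply: sumr_ge0 => i _; apply: ler0n.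
case: (eqVneq (mu S) 0) => [->|mS]; first by rewrite !mul0r addr0.
case: asboolP => g /=.
  by rewrite mulr1 lerDl; apply: mulr_ge0.
have [i bi] : exists i, bad i S.
  apply: contrapT => hne; apply: g; apply: (h S mS) => i bi; apply: hne; by exists i.
rewrite mulr0 add0r -[X in X <= _]mulr1; apply: ler_wpM2l => //.
rewrite (bigD1 i) //=.
have -> : (`[< bad i S >] : nat) = 1%N by case: asboolP.
rewrite lerDl; apply: sumr_ge0 => j _; apply: ler0n.
Qed.

End Prob.

Lemma capF n (S G : edge_set n) (P : {set 'I_n} -> bool) : S \subset G ->
  S :&: [set e in G | P e] = [set e in S | P e].
Proof.
move=> SG; apply/setP => e; rewrite !inE.
by case eS: (e \in S); rewrite ?andbF //= (subsetP SG).
Qed.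

Definition Ityp := ({set 'I_3} + {set 'I_3} * {set 'I_3})%type.

Lemma prob_bound (R : realType) (n : nat) (G : edge_set n) (mu : {ffun edge_set n -> R})
  (p q eps d theta : R) (part : 'I_n -> 'I_3) :
  is_simple_graph G -> M1p p G mu -> 0 < q -> (0 < n)%N ->
  (forall U : {set 'I_n},
     `| (e_ind G U)%:R - q * (#|U|%:R ^+ 2 / 2) | <= eps ^+ 2 / 4 * q * n%:R ^+ 2) ->
  p = theta ^+ 2 + (1 - theta) ^+ 2 -> 0 < d -> 4 * d <= 2 * theta - 1 -> d <= 1 ->
  eps = d ^+ 4 -> 0 <= p <= 1 ->
  theta = (1 + Num.sqrt (2 * p - 1)) / 2 -> d = eps `^ (4^-1) -> 4 * d <= 1 ->
  1 - (#|{: Ityp}|%:R * 2) / (eps ^+ 4 * (q * n%:R)) <= Prob mu (good_event p q eps part).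
Proof.
move=> sG hM qpos npos disc hp hd hds hd1 heps p01 hth hdd hd14.
have eps0 : 0 < eps by rewrite heps; apply: exprn_gt0.
set t := eps ^+ 2 * q * n%:R ^+ 2.
have t0 : 0 < t by rewrite /t; apply: mulr_gt0; [apply: mulr_gt0 => //; apply: exprn_gt0 | apply: exprn_gt0; rewrite ltr0n].
pose FI (T : {set 'I_3}) := [set e in G | e \subset Vs n part T].
pose FB (T1 T2 : {set 'I_3}) :=
  [set e in G | [exists x in Vs n part T1, exists y in Vs n part T2, e == [set x; y]]].
pose bad (i : Ityp) (S : edge_set n) : Prop :=
  match i with
  | inl T => (#|S :&: FI T|)%:R < p * #|FI T|%:R - t
  | inr (T1, T2) => (#|S :&: FB T1 T2|)%:R < p * #|FB T1 T2|%:R - t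
  end.
have ub := union_bound R n G mu p hM Ityp (good_event p q eps part) bad.
have ub' : 1 - \sum_i Prob mu (bad i) <= Prob mu (good_event p q eps part).
  apply: ub => S mS nb.
  have SG := mu_supp R n G mu p hM S mS.
  have heta : 0 <= eps ^+ 2 <= eps ^+ 2 by rewrite lexx sqr_ge0.
  case/andP: p01 => p0 p1.
  apply: (good R n G S p q eps (eps ^+ 2) d theta sG SG qpos npos disc hp hd hds hd1 heps p1 heta
     part hth hdd hd14).
  - move=> T; have := nb (inl T); rewrite /= /FI capF // => /negP; rewrite -leNgt.
    by rewrite /e_ind /t mulrA.
  - move=> T1 T2; have := nb (inr (T1, T2)); rewrite /= /FB capF // => /negP; rewrite -leNgt.
    by rewrite /e_bip /t mulrA.
apply: le_trans ub'; rewrite lerD2l lerN2.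
have hG : (#|G|%:R : R) <= q * n%:R ^+ 2.
  have := disc [set: 'I_n]; rewrite ler_norml => /andP[_ h].
  have EG : e_ind G [set: 'I_n] = #|G|.
    by rewrite /e_ind; apply: eq_card => e; rewrite !inE finset.subsetT andbT.
  rewrite EG cardsT card_ord in h.
  have e1 : eps <= 1.
    rewrite heps; apply: exprn_ile1; [apply: ltW|] => //.
  have e2 : eps ^+ 2 <= 1 by apply: exprn_ile1 => //; apply: ltW.
  have qN : 0 <= q * n%:R ^+ 2 by apply: mulr_ge0; [apply: ltW | apply: exprn_ge0].
  have e3 : eps ^+ 2 * (q * n%:R ^+ 2) <= q * n%:R ^+ 2 by apply: ler_piMl.
  have e4 : q * (n%:R ^+ 2 / 2) = 1 / 2 * (q * n%:R ^+ 2) by field.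
  rewrite e4 in h.
  lra.
have each : forall i, Prob mu (bad i) <= 2 / (eps ^+ 4 * (q * n%:R)).
  have p01' := p01.
  have key : forall F : edge_set n, F \subset G ->
      Prob mu (fun S => (#|S :&: F|)%:R < p * #|F|%:R - t) <= 2 / (eps ^+ 4 * (q * n%:R)).
    move=> F FG; apply: le_trans (cheb R n G mu p hM sG p01' F t FG t0) _.
    have -> : 2 / (eps ^+ 4 * (q * n%:R)) = (2 * n%:R * (q * n%:R ^+ 2)) / t ^+ 2.
      rewrite /t; field.
      by rewrite pnatr_eq0 -lt0n npos /= !lt0r_neq0.
    apply: ler_wpM2r; first by rewrite invr_ge0 sqr_ge0.
    rewrite !natrM; apply: ler_wpM2l => //.
  case => [T | [T1 T2]] /=.
  - by apply: key; apply/subsetP => e; rewrite inE => /andP[].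
  - by apply: key; apply/subsetP => e; rewrite inE => /andP[].
apply: le_trans (ler_sum _ (fun i _ => each i)) _.
set c := 2 / (eps ^+ 4 * (q * n%:R)).
have -> : \sum_(i : Ityp) c = #|{: Ityp}|%:R * c by rewrite sumr_const mulr_natl.
by rewrite /c mulrA.
Qed.

Local Open Scope classical_set_scope.
Local Open Scope ring_scope.

Theorem lemma23 (R : realType) (p : R) :
  1 / 2 < p <= 1 ->
  exists2 eps0 : R, 0 < eps0 &
  forall eps : R, 0 < eps < eps0 ->
  forall (q : nat -> R) (G : forall n : nat, edge_set n)
         (part : forall n : nat, 'I_n -> 'I_3)
         (mu : forall n : nat, {ffun edge_set n -> R}),
    (fun n : nat => q n / (ln n%:R / n%:R)) @ \oo --> +oo ->
    (forall n, is_simple_graph (G n)) ->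
    (forall n (U : {set 'I_n}),
       `| (e_ind (G n) U)%:R - q n * (#|U|%:R ^+ 2 / 2) |
         <= eps ^+ 2 / 4 * q n * n%:R ^+ 2) ->
    (forall n, M1p p (G n) (mu n)) ->
    (fun n : nat => Prob (mu n) (good_event p (q n) eps (part n))) @ \oo --> (1 : R).
Proof.
move=> /andP[hp12 hp1].
set s := Num.sqrt (2 * p - 1).
have hs2 : s ^+ 2 = 2 * p - 1 by rewrite /s sqr_sqrtr //; lra.
have s0 : 0 < s by rewrite /s sqrtr_gt0; lra.
have s1 : s <= 1 by nra.
exists ((s / 4) ^+ 4); first by apply: exprn_gt0; lra.
move=> eps /andP[e0 e1] q G part mu hq sG disc hM.
set theta := (1 + s) / 2.
set d := eps `^ 4^-1.
have d0 : 0 < d by rewrite /d powR_gt0.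
have hd4 : eps = d ^+ 4.
  rewrite /d -powR_mulrn ?powR_ge0 // -powRrM mulVf ?pnatr_eq0 // powRr1 //.
  exact: ltW.
have E4 : forall x : R, x ^+ 4 = (x * x) * (x * x) by move=> x; ring.
have dlt : d < s / 4.
  rewrite ltNge; apply/negP => h.
  have s40 : 0 <= s / 4 by lra.
  have h2 : (s / 4) * (s / 4) <= d * d by apply: ler_pM.
  have h4 : ((s / 4) * (s / 4)) * ((s / 4) * (s / 4)) <= (d * d) * (d * d).
    by apply: ler_pM => //; apply: mulr_ge0.
  rewrite E4 in e1; rewrite E4 in hd4; lra.
have hds : 4 * d <= 2 * theta - 1 by rewrite /theta; lra.
have hd1 : d <= 1 by lra.
have hd14 : 4 * d <= 1 by lra.
have hp : p = theta ^+ 2 + (1 - theta) ^+ 2.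
  have E : ((1 + s) / 2) ^+ 2 + (1 - (1 + s) / 2) ^+ 2 = (1 + s ^+ 2) / 2 by field.
  by rewrite /theta E hs2; field.
have p01 : 0 <= p <= 1 by apply/andP; split; lra.
set K := #|{: Ityp}|%:R * 2 : R.
have K0 : 0 < K by rewrite /K; apply: mulr_gt0 => //; rewrite ltr0n; apply/card_gt0P; exists (inl finset.set0).
apply/cvgrPdist_le => e' e'0.
move/cvgryPge: hq => hq.
have ln2 : 0 < ln (2 : R) by apply: ln_gt0; lra.
have eps40 : 0 < eps ^+ 4 by apply: exprn_gt0.
set A := K / (eps ^+ 4 * e' * ln 2).
have A0 : 0 < A by rewrite /A; apply: divr_gt0 => //; apply: mulr_gt0 => //; apply: mulr_gt0.
near=> k.
have hk2 : (2 <= k)%N by near: k; exact: nbhs_infty_ge.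
have hkA : A <= q k / (ln k%:R / k%:R) by near: k; exact: hq A.
have k0 : (0 < k)%N by apply: leq_trans hk2.
have kR : 0 < k%:R :> R by rewrite ltr0n.
have lnk : ln 2 <= ln (k%:R : R).
  by rewrite ler_ln ?posrE // ?ler_nat //; lra.
have lnk0 : 0 < ln (k%:R : R) by lra.
have E : q k * k%:R = q k / (ln k%:R / k%:R) * ln k%:R.
  by field; rewrite !lt0r_neq0.
have qk : A * ln 2 <= q k * k%:R.
  rewrite E; apply: le_trans (_ : A * ln k%:R <= _).
    by apply: ler_wpM2l => //; apply: ltW.
  by apply: ler_wpM2r => //; apply: ltW.
have EA : A * ln 2 = K / (eps ^+ 4 * e') by rewrite /A; field; rewrite !lt0r_neq0.
rewrite EA in qk.
have X0 : 0 < q k * k%:R by apply: lt_le_trans qk; apply: divr_gt0 => //; apply: mulr_gt0.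
have qpos : 0 < q k.
  by move: X0; rewrite pmulr_lgt0.
have hb := prob_bound R k (G k) (mu k) p (q k) eps d theta (part k) (sG k) (hM k) qpos k0
  (disc k) hp d0 hds hd1 hd4 p01 erefl erefl hd14.
have hB : K / (eps ^+ 4 * (q k * k%:R)) <= e'.
  rewrite ler_pdivrMr; last by apply: mulr_gt0.
  move: qk; rewrite ler_pdivrMr; last by apply: mulr_gt0.
  have -> : e' * (eps ^+ 4 * (q k * k%:R)) = q k * k%:R * (eps ^+ 4 * e') by ring.
  by [].
have hle1 := Prob_le1 _ _ _ _ _ (hM k) (good_event p (q k) eps (part k)).
rewrite ger0_norm; last by lra.
rewrite /K in hB.
lra.
Unshelve. all: by end_near.
Qed.
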